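(* In a network satisfying (H1) and (H2), let $V$ be an intermediate species, let $\widetilde Y$ be the enzyme of the connected component containing $V$, and let $Y$ be a non-intermediate species that is the enzyme of some connected component whose set of substrates/products equals $\mathscr{S}_V$. Let $X$ be a non-intermediate species with $X\in\mathscr{S}^{(\alpha)}$ for some $\alpha\ge1$ and $Y,\widetilde Y\notin\mathscr{S}^{(\alpha)}$. If a monomial $y^r v$ ($r\ge0$) appears in $x^{(\ell)}$ for some $\ell\ge1$, then $X\in\mathscr{S}_V$. Moreover, either $V$ reacts to $X$, or $r\ge1$, $\ell\ge2$, and a monomial $y^t v$ with $t<r$ appears in $z_w^{(i)}$ for some $i\le\ell-2$, for a species $Z_w$ involved in a block of reactions $Y+Z_w\rightleftarrows W\to Y+X$ (reactions $Y+Z_w\to W$, $W\to Y+Z_w$, $W\to Y+X$). In the latter case, if $\ell$ is the smallest positive integer such that some monomial $y^{r'}v$ ($r'\ge0$) appears in $x^{(\ell)}$, then $t=r-1$.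
   Context: Species are capital letters, concentrations lower-case letters. Mass-action system: $\dot{\mathbf{x}}=\sum_{y\to y'}k_{yy'}\mathbf{x}^y(y'-y)$, rates $k_{yy'}>0$. Total derivative: $\dot\varphi=\sum_i\frac{\partial\varphi}{\partial x_i}\dot x_i$ with $\dot x_i$ replaced by the right-hand side; $\varphi^{(\ell)}$ the $\ell$-th iterate ($\varphi^{(0)}=\varphi$); a monomial appears if its coefficient (a polynomial in rate constants) is nonzero. (H1) Every connected component has the form $Y+S_0\rightleftarrows U_1\to Y+S_1\rightleftarrows\cdots\rightleftarrows U_L\to Y+S_L$ (reactions $Y+S_{j-1}\to U_j$, $U_j\to Y+S_{j-1}$, $U_j\to Y+S_j$), unique enzyme $Y$; intermediates distinct throughout the network; non-intermediates of a component pairwise distinct but may appear in other components; each complex in a unique component. $\mathscr{S}_U$ = set of substrates/products of the component containing intermediate $U$. (H2) A partition $\mathscr{S}^{(0)}\sqcup\cdots\sqcup\mathscr{S}^{(M)}$ ($M\ge2$, nonempty, $\mathscr{S}^{(0)}$ the intermediates) with: for each intermediate $U$ with enzyme $Y$, some $\alpha\ge1$ has $\mathscr{S}_U\subseteq\mathscr{S}^{(\alpha)}$, $Y\notin\mathscr{S}^{(\alpha)}$. An intermediate $U$ reacts to a non-intermediate $X_1$ if there is a reaction $U\to X_1+X_2$ with $X_2$ non-intermediate. *)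

(* Defs.v *)
From HB Require Import structures.
From mathcomp Require Import all_boot all_order all_algebra.
Set Implicit Arguments. Unset Strict Implicit. Unset Printing Implicit Defensive.
Import GRing.Theory.
Local Open Scope ring_scope.

Definition mono (V : finType) := {ffun V -> nat}.
Definition mpoly (V : finType) := seq (int * mono V).

Section MPoly.
Variable V : finType.
Implicit Types (p q : mpoly V) (m : mono V).

Definition coef p m : int := \sum_(t <- p | t.2 == m) t.1.
Definition padd p q : mpoly V := p ++ q.
Definition pmul p q : mpoly V :=
  [seq (a.1 * b.1, [ffun v => (a.2 v + b.2 v)%N]) | a : int * mono V <- p, b : int * mono V <- q].
Definition pvar (v : V) : mpoly V := [:: (1, [ffun w => nat_of_bool (w == v)])].
Definition pderiv (v : V) p : mpoly V :=
  [seq (t.1 * (t.2 v)%:Z, [ffun w => if w == v then (t.2 w).-1 else t.2 w]) | t : int * mono V <- p].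
End MPoly.

Section Network.
Variable S : finType.

Definition cplx := {ffun S -> nat}.
Definition c1 (U : S) : cplx := [ffun Z => nat_of_bool (Z == U)].
Definition c2 (Y X : S) : cplx := [ffun Z => (nat_of_bool (Z == Y) + nat_of_bool (Z == X))%N].
Definition reaction := (cplx * cplx)%type.  (* (source, target) *)

(* A connected component  Y+S_0 <=> U_1 -> Y+S_1 <=> ... <=> U_L -> Y+S_L
   is given by (enzyme Y, [S_0;...;S_L], [U_1;...;U_L]). *)
Definition rcomp := (S * seq S * seq S)%type.
Definition enz (c : rcomp) : S := c.1.1.
Definition subs (c : rcomp) : seq S := c.1.2.
Definition ints (c : rcomp) : seq S := c.2.
Definition sub_ (c : rcomp) (j : nat) : S := nth (enz c) (subs c) j.
Definition int_ (c : rcomp) (j : nat) : S := nth (enz c) (ints c) j.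

Definition comp_reactions (c : rcomp) : seq reaction :=
  flatten [seq [:: (c2 (enz c) (sub_ c j), c1 (int_ c j));
                   (c1 (int_ c j), c2 (enz c) (sub_ c j));
                   (c1 (int_ c j), c2 (enz c) (sub_ c j.+1))]
          | j <- iota 0 (size (ints c))].
Definition comp_complexes (c : rcomp) : seq cplx :=
  [seq c2 (enz c) s | s <- subs c] ++ [seq c1 u | u <- ints c].

Definition network := seq rcomp.
Definition reactions (N : network) : seq reaction := flatten (map comp_reactions N).
Definition intermediates (N : network) : seq S := flatten (map ints N).
Definition is_intermediate (N : network) (U : S) : bool := U \in intermediates N.
Definition species_of (N : network) : seq S :=
  flatten [seq enz c :: subs c ++ ints c | c <- N].

Definition H1 (N : network) : Prop :=
  [/\ (forall c, c \in N -> [/\ 0 < size (ints c), size (subs c) = (size (ints c)).+1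
                                 & uniq (enz c :: subs c)]%N),
      uniq (intermediates N),
      (forall c U, c \in N -> U \in intermediates N -> U \notin enz c :: subs c),
      uniq (flatten (map comp_complexes N))
    &
      (forall s : S, s \in species_of N)].

(* (H2): part s = the index alpha with s in S^(alpha) *)
Definition H2 (N : network) (M : nat) (part : S -> nat) : Prop :=
  [/\ (2 <= M)%N,
      (forall s, part s <= M)%N,
      (forall a, a <= M -> exists s, part s = a)%N,
      (forall s, (part s == 0%N) = is_intermediate N s)
    & (forall c U, c \in N -> U \in ints c ->
         exists a, [/\ (1 <= a)%N, (forall s, s \in subs c -> part s = a) & part (enz c) <> a])].

Definition nreac (N : network) := size (reactions N).
(* variables: concentrations (inl) and rate constants (inr) *)
Definition var (N : network) := (S + 'I_(nreac N))%type.

Definition zero_cplx : cplx := [ffun _ => 0%N].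
Definition reac (N : network) (r : 'I_(nreac N)) : reaction :=
  nth (zero_cplx, zero_cplx) (reactions N) r.

Definition field (N : network) (s : S) : mpoly (var N) :=
  [seq (((reac r).2 s)%:Z - ((reac r).1 s)%:Z,
        [ffun v : var N => match v with
                           | inl s' => (reac r).1 s'
                           | inr j => nat_of_bool (j == r) end])
  | r <- enum 'I_(nreac N)].

Definition tder (N : network) (phi : mpoly (var N)) : mpoly (var N) :=
  flatten [seq pmul (pderiv (inl s) phi) (field N s) | s <- enum S].

(* phi^(l) for phi = the concentration x of species X *)
Definition conc_deriv (N : network) (l : nat) (X : S) : mpoly (var N) :=
  iter l (@tder N) (pvar (inl X : var N)).

(* a monomial m in the concentrations appears in p if its coefficient,
   a polynomial in the rate constants, is nonzero *)
Definition appears (N : network) (m : {ffun S -> nat}) (p : mpoly (var N)) : Prop :=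
  exists mk : {ffun 'I_(nreac N) -> nat},
    coef p [ffun v : var N => match v with inl s => m s | inr j => mk j end] != 0.

Definition mono_yv (Y V : S) (r : nat) : {ffun S -> nat} :=
  [ffun s => (r * nat_of_bool (s == Y) + nat_of_bool (s == V))%N].

Definition reacts_to (N : network) (U X1 : S) : Prop :=
  exists X2, ~~ is_intermediate N X2 /\ (c1 U, c2 X1 X2) \in reactions N.

Definition block (N : network) (Y Z W X : S) : Prop :=
  [/\ (c2 Y Z, c1 W) \in reactions N, (c1 W, c2 Y Z) \in reactions N
    & (c1 W, c2 Y X) \in reactions N].
End Network.

(* Main.v *)
Require Import Defs.
From mathcomp Require Import all_boot all_order all_algebra.
From mathcomp Require Import zify.
Set Implicit Arguments. Unset Strict Implicit. Unset Printing Implicit Defensive.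
Import GRing.Theory.

Section Lin.
Variable V : finType.
Local Open Scope ring_scope.
Implicit Types (p q : mpoly V).

Definition lin p (G : mono V -> int) : int := \sum_(t <- p) t.1 * G t.2.

Lemma lin_cat p q G : lin (p ++ q) G = lin p G + lin q G.
Proof. by rewrite /lin big_cat. Qed.

Lemma lin_ext p G1 G2 : (forall a, G1 a = G2 a) -> lin p G1 = lin p G2.
Proof. by move=> h; apply: eq_bigr => t _; rewrite h. Qed.

Lemma linD p G1 G2 : lin p (fun a => G1 a + G2 a) = lin p G1 + lin p G2.
Proof. by rewrite /lin -big_split; apply: eq_bigr => t _; rewrite mulrDr. Qed.

Lemma lin_sum (I : Type) (r : seq I) p (G : I -> mono V -> int) :
  lin p (fun a => \sum_(i <- r) G i a) = \sum_(i <- r) lin p (G i).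
Proof.
rewrite /lin (exchange_big_dep xpredT) //=; apply: eq_bigr => t _.
by rewrite big_distrr.
Qed.

Lemma linZ p k G : lin p (fun a => k * G a) = k * lin p G.
Proof. by rewrite /lin big_distrr; apply: eq_bigr => t _; rewrite mulrCA. Qed.

Lemma lin_swap p q (H : mono V -> mono V -> int) :
  lin p (fun a => lin q (fun b => H a b)) = lin q (fun b => lin p (fun a => H a b)).
Proof.
rewrite /lin; under eq_bigr do rewrite big_distrr.
rewrite exchange_big; apply: eq_bigr => b _; rewrite big_distrr.
by apply: eq_bigr => a _; apply: mulrCA.
Qed.

Lemma coefE p m : coef p m = lin p (fun b => (b == m)%:R).
Proof.
rewrite /coef /lin big_mkcond; apply: eq_bigr => t _.
by case: (t.2 == m); rewrite ?mulr1 ?mulr0.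
Qed.

Lemma sum_nz (I : Type) (r : seq I) (F : I -> int) :
  \sum_(i <- r) F i != 0 -> exists i, F i != 0.
Proof.
elim: r => [|a r IH]; first by rewrite big_nil eqxx.
rewrite big_cons; case: (eqVneq (F a) 0) => [->|h]; last by exists a.
by rewrite add0r.
Qed.

Lemma natR_nz (b : bool) : (b%:R : int) != 0 -> b.
Proof. by case: b. Qed.

Lemma posz_nz (b : bool) : (Posz b) != 0 -> b.
Proof. by case: b. Qed.

Lemma addr_nz (a b : int) : a + b != 0 -> a != 0 \/ b != 0.
Proof. by case: (eqVneq a 0) => [->|]; [rewrite add0r; right|left]. Qed.

Lemma mulr_nzr (a b : int) : a * b != 0 -> b != 0.
Proof. by case: (eqVneq b 0) => [->|//]; rewrite mulr0 eqxx. Qed.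

Lemma mulr_nzl (a b : int) : a * b != 0 -> a != 0.
Proof. by case: (eqVneq a 0) => [->|//]; rewrite mul0r eqxx. Qed.

Lemma lin_undup p G :
  lin p G = \sum_(m <- undup (map snd p)) coef p m * G m.
Proof.
transitivity (\sum_(m <- undup (map snd p)) lin p (fun b => G m * (b == m)%:R)).
  have: {subset map snd p <= undup (map snd p)} by move=> x; rewrite mem_undup.
  have: uniq (undup (map snd p)) by apply: undup_uniq.
  move: (undup _) => D uD sD.
  rewrite -lin_sum; rewrite /lin; apply: eq_big_seq => t tp; congr (_ * _).
  rewrite (bigD1_seq t.2) //=; last by apply: sD; apply: map_f.
  rewrite eqxx mulr1 big1 ?addr0 // => m /negbTE; rewrite eq_sym => ->.
  by rewrite mulr0.
by apply: eq_bigr => m _; rewrite linZ coefE mulrC.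
Qed.

Lemma lin_nz p G : lin p G != 0 -> exists m, coef p m != 0 /\ G m != 0.
Proof.
rewrite lin_undup => /sum_nz [m h]; exists m; split.
  exact: mulr_nzl h.
exact: mulr_nzr h.
Qed.

Lemma lin_coef p q G : (forall m, coef p m = coef q m) -> lin p G = lin q G.
Proof.
move=> h.
have E r : {subset map snd r <= undup (map snd (p ++ q))} ->
    lin r G = \sum_(m <- undup (map snd (p ++ q))) coef r m * G m.
  move=> sD.
  under [RHS]eq_bigr do rewrite coefE mulrC -linZ.
  rewrite -lin_sum /lin; apply: eq_big_seq => t tp; congr (_ * _).
  have tD : t.2 \in undup (map snd (p ++ q)) by apply: sD; apply: map_f.
  rewrite (bigD1_seq t.2) ?undup_uniq //=.
  rewrite eqxx mulr1 big1 ?addr0 // => m /negbTE; rewrite eq_sym => ->.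
  by rewrite mulr0.
rewrite (E p) ?(E q); first by apply: eq_bigr => m _; rewrite h.
  by move=> x xq; rewrite mem_undup map_cat mem_cat xq orbT.
by move=> x xq; rewrite mem_undup map_cat mem_cat xq.
Qed.

Definition madd (a b : mono V) : mono V := [ffun v => (a v + b v)%N].
Definition msh (v : V) (a : mono V) : mono V :=
  [ffun w => if w == v then (a w).-1 else a w].

Lemma lin_pmul p q G :
  lin (pmul p q) G = lin p (fun a => lin q (fun b => G (madd a b))).
Proof.
rewrite /lin /pmul big_flatten /= big_map; apply: eq_bigr => a _.
rewrite big_map big_distrr; apply: eq_bigr => b _ /=.
by rewrite mulrA.
Qed.

Lemma lin_pderiv v p G :
  lin (pderiv v p) G = lin p (fun a => (a v)%:Z * G (msh v a)).
Proof. by rewrite /lin /pderiv big_map; apply: eq_bigr => t _ /=; rewrite mulrA. Qed.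

Lemma lin_pvar v G : lin (pvar v) G = G [ffun w => nat_of_bool (w == v)].
Proof. by rewrite /lin big_seq1 mul1r. Qed.

Lemma lin_seq1 c m G : lin [:: (c, m)] G = c * G m.
Proof. by rewrite /lin big_seq1. Qed.

Lemma coef_lin p m : coef p m = lin p (fun b => (b == m)%:R).
Proof. exact: coefE. Qed.
End Lin.

Lemma lin_flatten (V : finType) (L : seq (mpoly V)) G :
  lin (flatten L) G = (\sum_(l <- L) lin l G)%R.
Proof. by rewrite /lin big_flatten. Qed.

Section Deriv.
Variables (S : finType) (N : network S).
Local Open Scope ring_scope.
Local Notation VT := (var N).
Local Notation tderN := (@tder S N).

Definition T (G : mono VT -> int) (a : mono VT) : int :=
  \sum_(s <- enum S) (a (inl s))%:Z *
     lin (field N s) (fun b => G (madd (msh (inl s) a) b)).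

Lemma lin_tder p G : lin (tderN p) G = lin p (T G).
Proof.
rewrite /tder lin_flatten big_map.
under eq_bigr do rewrite lin_pmul lin_pderiv.
by rewrite /T -lin_sum.
Qed.

Lemma lin_iter n p G : lin (iter n tderN p) G = lin p (iter n T G).
Proof.
elim: n G => [|n IH] G //=.
by rewrite lin_tder IH -iterSr.
Qed.

Lemma coef_iter n p M :
  coef (iter n tderN p) M = lin p (iter n T (fun b => (b == M)%:R)).
Proof. by rewrite coefE lin_iter. Qed.

Lemma madd_sh1 (a b c : mono VT) s : (0 < a s)%N ->
  madd (msh s (madd a b)) c = madd (madd (msh s a) c) b.
Proof.
move=> h; apply/ffunP => w; rewrite !ffunE.
case: eqP => [->|_]; lia.
Qed.

Lemma madd_sh2 (a b c : mono VT) s : (0 < b s)%N ->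
  madd (msh s (madd a b)) c = madd a (madd (msh s b) c).
Proof.
move=> h; apply/ffunP => w; rewrite !ffunE.
case: eqP => [->|_]; lia.
Qed.

Lemma lin_tder_pmul p q G :
  lin (tderN (pmul p q)) G = lin (pmul (tderN p) q) G + lin (pmul p (tderN q)) G.
Proof.
rewrite lin_tder !lin_pmul lin_tder.
under [X in _ = _ + X]lin_ext do rewrite lin_tder.
rewrite -linD; apply: lin_ext => a.
rewrite /T lin_sum.
under [X in _ = _ + X]lin_ext do rewrite /T.
rewrite lin_sum -big_split; apply: eq_bigr => s _ /=.
rewrite lin_swap -linZ -linD; apply: lin_ext => b.
rewrite -!linZ -linD; apply: lin_ext => c.
rewrite ffunE PoszD mulrDl; congr (_ + _).
  case: (posnP (a (inl s))) => [->|h]; first by rewrite !mul0r.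
  by rewrite madd_sh1.
case: (posnP (b (inl s))) => [->|h]; first by rewrite !mul0r.
by rewrite madd_sh2.
Qed.

Lemma split_pmul n p q M : coef (iter n tderN (pmul p q)) M != 0 ->
  exists i j M1 M2, [/\ (i + j)%N = n, M = madd M1 M2,
     coef (iter i tderN p) M1 != 0 & coef (iter j tderN q) M2 != 0].
Proof.
elim: n p q M => [|n IH] p q M.
  rewrite /= coefE lin_pmul => /lin_nz [a [ha /lin_nz [b [hb hab]]]].
  exists 0%N, 0%N, a, b; split => //.
  by move/natR_nz/eqP: hab.
rewrite iterSr coef_iter lin_tder_pmul -!coef_iter.
move/addr_nz => [/IH|/IH] [i [j [M1 [M2 [e1 e2 h1 h2]]]]].
  exists i.+1, j, M1, M2; split => //; first by rewrite -e1.
  by rewrite iterSr.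
exists i, j.+1, M1, M2; split => //; first by rewrite -e1 addnS.
by rewrite iterSr.
Qed.

Definition fmono (r : 'I_(nreac N)) : mono VT :=
  [ffun v : var N => match v with inl s' => (reac r).1 s' | inr j => nat_of_bool (j == r) end].

Lemma lin_field s G : lin (field N s) G =
  \sum_(r <- enum 'I_(nreac N)) (((reac r).2 s)%:Z - ((reac r).1 s)%:Z) * G (fmono r).
Proof. by rewrite /lin big_map. Qed.

Lemma tder_step P M : coef (tderN P) M != 0 ->
  exists A s r, coef P A != 0 /\ M = madd (msh (inl s) A) (fmono r).
Proof.
rewrite coefE lin_tder => /lin_nz [A [hA]].
rewrite /T => /sum_nz [s /mulr_nzr].
rewrite lin_field => /sum_nz [r /mulr_nzr].
by move/natR_nz/eqP => <-; exists A, s, r.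
Qed.

Lemma field_split n f M : coef (iter n.+1 tderN (pvar (inl f : VT))) M != 0 ->
  exists r, ((reac r).2 f != (reac r).1 f) /\
     coef (iter n tderN [:: (1, fmono r)]) M != 0.
Proof.
rewrite coef_iter lin_pvar /= {1}/T => /sum_nz [s h].
have := mulr_nzl h; rewrite ffunE => /posz_nz/eqP [es]; subst s.
move: h => /mulr_nzr; rewrite lin_field => /sum_nz [r h].
exists r; split.
  apply/negP => /eqP e; move: (mulr_nzl h); by rewrite e subrr eqxx.
rewrite coef_iter lin_seq1 mul1r.
have -> : fmono r = madd (msh (inl f) [ffun w => nat_of_bool (w == inl f)]) (fmono r).
  by apply/ffunP => w; rewrite !ffunE; case: eqP.
exact: mulr_nzr h.
Qed.
End Deriv.

Lemma eq_inl (A B : eqType) (x y : A) : (@inl A B x == inl y) = (x == y).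
Proof. by apply/eqP/eqP => [[]|->]. Qed.

Section Deriv2.
Variables (S : finType) (N : network S).
Local Open Scope ring_scope.
Local Notation VT := (var N).
Local Notation tderN := (@tder S N).

Definition kmono (r : 'I_(nreac N)) : mono VT :=
  [ffun v : var N => match v with inl _ => 0%N | inr j => nat_of_bool (j == r) end].
Definition kp r : mpoly VT := [:: (1, kmono r)].

Lemma fmono_c1 r u : (reac r).1 = c1 u ->
  [:: (1, fmono r)] = pmul (pvar (inl u : VT)) (kp r).
Proof.
move=> e; rewrite /pmul /pvar /kp /=; congr [:: (_, _)].
apply/ffunP => -[s|j]; rewrite !ffunE /= ?e ?ffunE ?eq_inl ?addn0 //.
Qed.

Lemma fmono_c2 r a b : (reac r).1 = c2 a b ->
  [:: (1, fmono r)] = pmul (pmul (pvar (inl a : VT)) (pvar (inl b : VT))) (kp r).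
Proof.
move=> e; rewrite /pmul /pvar /kp /=; congr [:: (_, _)].
apply/ffunP => -[s|j]; rewrite !ffunE /= ?e ?ffunE ?eq_inl ?addn0 //.
Qed.

Lemma iter_kp j r M : coef (iter j.+1 tderN (kp r)) M = 0.
Proof.
rewrite coef_iter /kp lin_seq1 /= /T big1 ?mulr0 // => s _.
by rewrite ffunE /= mul0r.
Qed.

Definition sp (M : mono VT) : {ffun S -> nat} := [ffun s => M (inl s)].

Definition appearsS (m : {ffun S -> nat}) (P : mpoly VT) :=
  exists M, sp M = m /\ coef P M != 0.

Lemma appearsE m P : appears m P <-> appearsS m P.
Proof.
split.
  move=> [mk h]; eexists; split; last exact: h.
  by apply/ffunP => s; rewrite !ffunE.
move=> [M [e h]]; exists [ffun j => M (inr j)].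
suff -> : [ffun v : VT => match v with inl s => m s | inr j => [ffun j => M (inr j)] j end] = M by [].
by apply/ffunP => -[s|j]; rewrite !ffunE // -e ffunE.
Qed.

Lemma strip n P r m : appearsS m (iter n tderN (pmul P (kp r))) ->
  appearsS m (iter n tderN P).
Proof.
move=> [M [<- /split_pmul [i [[|j] [M1 [M2 [e eM h1 h2]]]]]]]; last first.
  by rewrite iter_kp eqxx in h2.
move: h2; rewrite /= coefE lin_seq1 mul1r => /natR_nz/eqP e2.
exists M1; split; last by rewrite -e addn0.
apply/ffunP => s; rewrite eM -e2 !ffunE /=.
by rewrite addn0.
Qed.

Definition addS (m1 m2 : {ffun S -> nat}) : {ffun S -> nat} := [ffun s => (m1 s + m2 s)%N].

Lemma split_app n p q m : appearsS m (iter n tderN (pmul p q)) ->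
  exists i j m1 m2, [/\ (i + j)%N = n, m = addS m1 m2,
     appearsS m1 (iter i tderN p) & appearsS m2 (iter j tderN q)].
Proof.
move=> [M [<- /split_pmul [i [j [M1 [M2 [e eM h1 h2]]]]]]].
exists i, j, (sp M1), (sp M2); split => //; last by exists M2.
  by apply/ffunP => s; rewrite eM !ffunE.
by exists M1.
Qed.

Lemma app_pvar (u : S) m : appearsS m (pvar (inl u : VT)) -> m = c1 u.
Proof.
move=> [M [<-]]; rewrite coefE lin_pvar => /natR_nz/eqP <-.
by apply/ffunP => s; rewrite !ffunE.
Qed.

Lemma app_step n P m : appearsS m (iter n.+1 tderN P) ->
  exists A s (r : 'I_(nreac N)), coef (iter n tderN P) A != 0 /\ m = addS (sp (msh (inl s) A)) ((reac r).1).
Proof.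
move=> [M [<- /tder_step [A [s [r [hA ->]]]]]].
exists A, s, r; split => //.
by apply/ffunP => t; rewrite !ffunE.
Qed.

Lemma app_field n f m : appearsS m (iter n.+1 tderN (pvar (inl f : VT))) ->
  exists r : 'I_(nreac N), ((reac r).2 f != (reac r).1 f) /\
     (forall u, (reac r).1 = c1 u ->
          appearsS m (iter n tderN (pvar (inl u : VT)))) /\
     (forall a b, (reac r).1 = c2 a b ->
          appearsS m (iter n tderN (pmul (pvar (inl a : VT)) (pvar (inl b : VT))))).
Proof.
move=> [M [<- /field_split [r [hr h]]]]; exists r; split => //; split.
  move=> u e; apply: (@strip _ _ r); exists M; split => //.
  by rewrite -fmono_c1.
move=> a b e; apply: (@strip _ _ r); exists M; split => //.
by rewrite -fmono_c2.
Qed.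
End Deriv2.

Lemma uniq_flat (A T : eqType) (f : A -> seq T) (L : seq A) a b x :
  uniq (flatten (map f L)) -> a \in L -> b \in L -> x \in f a -> x \in f b -> a = b.
Proof.
elim: L => [|c L IH] //=; rewrite cat_uniq => /and3P [_ hd ul].
have inL y : y \in L -> x \in f y -> x \in flatten (map f L).
  by move=> yL xy; apply/flattenP; exists (f y) => //; apply: map_f.
rewrite !inE => /orP [/eqP ->|aL] /orP [/eqP ->|bL] xa xb //.
- by move: hd; rewrite (_ : has _ _ = true) //; apply/hasP; exists x => //; apply: inL xb.
- by move: hd; rewrite (_ : has _ _ = true) //; apply/hasP; exists x => //; apply: inL xa.
- exact: IH.
Qed.

Lemma uniq_flat1 (A T : eqType) (f : A -> seq T) (L : seq A) a :
  uniq (flatten (map f L)) -> a \in L -> uniq (f a).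
Proof.
elim: L => [|c L IH] //=; rewrite cat_uniq => /and3P [uc _ ul].
by rewrite inE => /orP [/eqP ->|aL] //; apply: IH.
Qed.

Section Net.
Variables (S : finType) (N : network S).
Hypothesis hH1 : H1 N.
Implicit Types (c : rcomp S) (u s a b : S).

Lemma c1E (u s : S) : c1 u s = nat_of_bool (s == u). Proof. by rewrite ffunE. Qed.
Lemma c2E (a b s : S) : c2 a b s = (nat_of_bool (s == a) + nat_of_bool (s == b))%N.
Proof. by rewrite ffunE. Qed.
Lemma c2C (a b : S) : c2 a b = c2 b a.
Proof. by apply/ffunP => s; rewrite !c2E addnC. Qed.

Lemma reactionsP rho : rho \in reactions N -> exists c j, [/\ c \in N, (j < size (ints c))%N &
   rho = (c2 (enz c) (sub_ c j), c1 (int_ c j)) \/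
   rho = (c1 (int_ c j), c2 (enz c) (sub_ c j)) \/
   rho = (c1 (int_ c j), c2 (enz c) (sub_ c j.+1))].
Proof.
move/flattenP => [rs /mapP [c cN ->]] /flattenP [l /mapP [j]].
rewrite mem_iota add0n => /andP [_ jl] -> h; exists c, j; split => //.
by move: h; rewrite !inE => /or3P [/eqP|/eqP|/eqP]; auto.
Qed.

Lemma reacts_in c j : c \in N -> (j < size (ints c))%N ->
  [/\ (c2 (enz c) (sub_ c j), c1 (int_ c j)) \in reactions N,
      (c1 (int_ c j), c2 (enz c) (sub_ c j)) \in reactions N &
      (c1 (int_ c j), c2 (enz c) (sub_ c j.+1)) \in reactions N].
Proof.
move=> cN jl.
have H x : x \in [:: (c2 (enz c) (sub_ c j), c1 (int_ c j));
                   (c1 (int_ c j), c2 (enz c) (sub_ c j));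
                   (c1 (int_ c j), c2 (enz c) (sub_ c j.+1))] -> x \in reactions N.
  move=> hx; apply/flattenP; exists (comp_reactions c); first by apply: map_f.
  apply/flattenP; eexists; last exact: hx.
  by apply/mapP; exists j => //; rewrite mem_iota add0n.
by split; apply: H; rewrite !inE eqxx ?orbT.
Qed.

Lemma reac_in (r : 'I_(nreac N)) : reac r \in reactions N.
Proof. by rewrite /reac mem_nth. Qed.

Lemma interP u : is_intermediate N u -> exists2 c, c \in N & u \in ints c.
Proof. by move/flattenP => [l /mapP [c cN ->]] h; exists c. Qed.

Lemma int_mem c j : (j < size (ints c))%N -> int_ c j \in ints c.
Proof. by move=> h; rewrite /int_ mem_nth. Qed.

Lemma int_is c j : c \in N -> (j < size (ints c))%N -> is_intermediate N (int_ c j).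
Proof.
move=> cN jl; apply/flattenP; exists (ints c); first by apply: map_f.
exact: int_mem.
Qed.

Lemma in_int_is c u : c \in N -> u \in ints c -> is_intermediate N u.
Proof. by move=> cN h; apply/flattenP; exists (ints c) => //; apply: map_f. Qed.

Lemma int_comp c c' u : c \in N -> c' \in N -> u \in ints c -> u \in ints c' -> c = c'.
Proof. by case: hH1 => _ u1 _ _ _; apply: uniq_flat u1. Qed.

Lemma int_uniq c c' j j' : c \in N -> c' \in N -> (j < size (ints c))%N ->
  (j' < size (ints c'))%N -> int_ c j = int_ c' j' -> c = c' /\ j = j'.
Proof.
move=> cN cN' jl jl' e.
have ec : c = c' by apply: (int_comp cN cN' (int_mem jl)); rewrite e int_mem.
subst c'; split => //; apply/eqP.
case: hH1 => _ u1 _ _ _.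
by rewrite -(nth_uniq (enz c) jl jl' (uniq_flat1 u1 cN)); apply/eqP.
Qed.

Lemma nonint c s : c \in N -> s \in enz c :: subs c -> ~~ is_intermediate N s.
Proof.
case: hH1 => _ _ h3 _ _ cN hs; apply/negP => hi.
by move: (h3 c s cN hi); rewrite hs.
Qed.

Lemma size_subs c : c \in N -> size (subs c) = (size (ints c)).+1.
Proof. by case: hH1 => h _ _ _ _ /h []. Qed.

Lemma sub_mem c j : c \in N -> (j <= size (ints c))%N -> sub_ c j \in subs c.
Proof. by move=> cN jl; rewrite /sub_ mem_nth // size_subs. Qed.

Lemma enz_nonint c : c \in N -> ~~ is_intermediate N (enz c).
Proof. by move=> cN; apply: (nonint cN); rewrite inE eqxx. Qed.

Lemma sub_nonint c j : c \in N -> (j <= size (ints c))%N -> ~~ is_intermediate N (sub_ c j).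
Proof. by move=> cN jl; apply: (nonint cN); rewrite inE sub_mem ?orbT. Qed.

Lemma subs_nonint c s : c \in N -> s \in subs c -> ~~ is_intermediate N s.
Proof. by move=> cN sl; apply: (nonint cN); rewrite inE sl orbT. Qed.

Lemma enz_neq_sub c s : c \in N -> s \in subs c -> enz c != s.
Proof.
case: hH1 => h _ _ _ _ cN sl; case: (h c cN) => _ _ /= /andP [nin _].
by apply/eqP => e; move: nin; rewrite e sl.
Qed.

Lemma sub_neqS c j : c \in N -> (j < size (ints c))%N -> sub_ c j != sub_ c j.+1.
Proof.
case: hH1 => h _ _ _ _ cN jl; case: (h c cN) => _ hs /= /andP [_ us].
have e1 : (j < size (subs c))%N by rewrite hs // ltnS ltnW.
have e2 : (j.+1 < size (subs c))%N by rewrite hs.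
by rewrite /sub_ (nth_uniq _ e1 e2 us) neq_ltn ltnSn.
Qed.

Lemma cplx_comp c c' K : c \in N -> c' \in N -> K \in comp_complexes c ->
  K \in comp_complexes c' -> c = c'.
Proof. by case: hH1 => _ _ _ u4 _; apply: uniq_flat u4. Qed.

Lemma cplx_mem c s : s \in subs c -> c2 (enz c) s \in comp_complexes c.
Proof. by move=> sl; rewrite mem_cat map_f. Qed.

Lemma inter_neq (u s : S) : is_intermediate N u -> ~~ is_intermediate N s -> u != s.
Proof. by move=> hu hs; apply/eqP => e; move: hs; rewrite -e hu. Qed.
End Net.

Section Main.
Variables (S : finType) (N : network S) (M : nat) (part : S -> nat).
Hypotheses (hH1 : H1 N) (hH2 : H2 N M part).
Variables (c0 cY : rcomp S) (V Y X : S) (alpha : nat).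
Hypotheses (hc0 : c0 \in N) (hV : V \in ints c0) (hYni : ~~ is_intermediate N Y)
  (hcY : cY \in N) (hcYe : enz cY = Y) (hcYs : subs cY =i subs c0)
  (hXni : ~~ is_intermediate N X) (hX : part X = alpha) (hYa : part Y <> alpha)
  (hYta : part (enz c0) <> alpha).
Implicit Types (c : rcomp S) (u s a b f : S).
Local Notation tderN := (@tder S N).
Local Notation yv := (mono_yv Y V).

Lemma Vint : is_intermediate N V. Proof. exact: in_int_is hc0 hV. Qed.
Lemma VnY : V != Y. Proof. exact: inter_neq Vint hYni. Qed.
Lemma XnY : X != Y. Proof. by apply/eqP => e; apply: hYa; rewrite -e. Qed.

Lemma H2c c : c \in N -> exists k, [/\ (1 <= k)%N, forall s, s \in subs c -> part s = k
   & part (enz c) <> k].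
Proof.
move=> cN; case: hH2 => _ _ _ _ h5; apply: (h5 c (int_ c 0)) => //.
by apply: int_mem; case: hH1 => h _ _ _ _; case: (h c cN).
Qed.

Lemma part_same c s s' : c \in N -> s \in subs c -> s' \in subs c -> part s = part s'.
Proof. by move=> cN sl sl'; case: (H2c cN) => k [_ h _]; rewrite !h. Qed.

Definition nY (m : {ffun S -> nat}) := (\sum_(s | s != Y) m s)%N.

Lemma nY_add (m1 m2 : {ffun S -> nat}) : nY (addS m1 m2) = (nY m1 + nY m2)%N.
Proof. by rewrite /nY -big_split; apply: eq_bigr => s _; rewrite ffunE. Qed.

Lemma nY_ge u (m : {ffun S -> nat}) : u != Y -> (m u <= nY m)%N.
Proof. by move=> uY; rewrite /nY (bigD1 u) //= leq_addr. Qed.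

Lemma nY_yv r : nY (yv r) = 1%N.
Proof.
rewrite /nY (bigD1 V) ?VnY //= ffunE eqxx (negbTE VnY) muln0 add0n.
rewrite big1 // => s /andP [sY sV]; by rewrite ffunE (negbTE sY) (negbTE sV) muln0.
Qed.

Lemma netP f E Sb U : c1 U f != c2 E Sb f -> [\/ f = U, f = E | f = Sb].
Proof.
rewrite c1E c2E; case: (eqVneq f U) => [->|_]; first by constructor 1.
case: (eqVneq f E) => [->|_]; first by constructor 2.
by case: (eqVneq f Sb) => [->|_]; first by constructor 3.
Qed.

Lemma nY_app i Z m : appearsS m (iter i tderN (pvar (inl Z : var N))) ->
  (Z = Y /\ i = 0%N /\ m = c1 Y) \/ (0 < nY m)%N.
Proof.
case: i => [|n].
  move/app_pvar => ->; case: (eqVneq Z Y) => [->|ZY]; first by left.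
  by right; apply: leq_trans (nY_ge _ ZY); rewrite c1E eqxx.
move/app_step => [A [s [r [_ ->]]]]; right; rewrite nY_add.
apply: leq_trans (leq_addl _ _).
have := reactionsP (reac_in r) => -[c [j [cN jl [e|[e|e]]]]]; rewrite e /=.
- case: (eqVneq (enz c) Y) => [eY|eY].
    have sY : sub_ c j != Y.
      by rewrite -eY eq_sym; apply: (enz_neq_sub hH1) => //; apply: (sub_mem hH1) => //; apply: ltnW.
    by apply: leq_trans (nY_ge _ sY); rewrite c2E eqxx addn1.
  by apply: leq_trans (nY_ge _ eY); rewrite c2E eqxx.
- have uY : int_ c j != Y by apply: (inter_neq (int_is cN jl) hYni).
  by apply: leq_trans (nY_ge _ uY); rewrite c1E eqxx.
- have uY : int_ c j != Y by apply: (inter_neq (int_is cN jl) hYni).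
  by apply: leq_trans (nY_ge _ uY); rewrite c1E eqxx.
Qed.

Lemma yv_sub r (m2 : {ffun S -> nat}) : yv r = addS (c1 Y) m2 -> (0 < r)%N /\ m2 = yv r.-1.
Proof.
move=> e; have := congr1 (fun g : {ffun S -> nat} => g Y) e; rewrite !ffunE eqxx eq_sym (negbTE VnY) /=.
move=> eY; have rp : (0 < r)%N by lia.
split => //; apply/ffunP => s; have := congr1 (fun g : {ffun S -> nat} => g s) e; rewrite !ffunE.
case: (s == Y); case: (s == V) => /=; lia.
Qed.

Lemma pair_split n a b r :
  appearsS (yv r) (iter n tderN (pmul (pvar (inl a : var N)) (pvar (inl b : var N)))) ->
  (0 < r)%N /\ ((a = Y /\ appearsS (yv r.-1) (iter n tderN (pvar (inl b : var N)))) \/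
                (b = Y /\ appearsS (yv r.-1) (iter n tderN (pvar (inl a : var N))))).
Proof.
move/split_app => [i [j [m1 [m2 [eij em h1 h2]]]]].
have n1 := nY_yv r; rewrite em nY_add in n1.
case: (nY_app h1) => [[aY [i0 m1e]]|p1]; case: (nY_app h2) => [[bY [j0 m2e]]|p2].
- by move: n1; rewrite m1e m2e /nY big1 // => s sY; rewrite c1E (negbTE sY).
- rewrite i0 add0n in eij; subst j; rewrite m1e in em; have [rp e2] := yv_sub em.
  by split => //; left; split => //; rewrite -e2.
- rewrite j0 addn0 in eij; subst i; rewrite m2e in em.
  have [rp e1] : (0 < r)%N /\ m1 = yv r.-1.
    by apply: yv_sub; rewrite em; apply/ffunP => s; rewrite !ffunE addnC.
  by split => //; right; split => //; rewrite -e1.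
- by move: n1; lia.
Qed.

Definition Ralpha g := (~~ is_intermediate N g /\ part g = alpha) \/
  (exists c, [/\ c \in N, g \in ints c &
     (part (enz c) = alpha \/ exists2 s, s \in subs c & part s = alpha)]).
Definition Bset g := g = V \/ g \in subs c0 \/ g \in ints cY.
Definition Good g := g != Y /\ Ralpha g /\ ~ Bset g.

Lemma yv_c1 r u : yv r = c1 u -> u = V.
Proof.
move=> e; have := congr1 (fun g : {ffun S -> nat} => g V) e.
rewrite !ffunE eqxx (negbTE VnY) muln0 /=.
by case: eqP.
Qed.

Lemma Ralpha_int c j : c \in N -> (j < size (ints c))%N -> Ralpha (int_ c j) ->
  part (enz c) = alpha \/ exists2 s, s \in subs c & part s = alpha.
Proof.
move=> cN jl [[ni _]|[c' [cN' uc' h]]]; first by move: ni; rewrite (int_is cN jl).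
by rewrite (int_comp hH1 cN cN' (int_mem jl) uc').
Qed.

Lemma Ralpha_non g : ~~ is_intermediate N g -> Ralpha g -> part g = alpha.
Proof.
move=> ni [[_ //]|[c [cN gc _]]].
by move: ni; rewrite (in_int_is cN gc).
Qed.

Lemma goal1 n : forall r f, Good f -> ~ appearsS (yv r) (iter n tderN (pvar (inl f : var N))).
Proof.
elim: n => [|n IH] r f [fY [Rf Bf]] h.
  by apply: Bf; left; apply: (yv_c1 (app_pvar h)).
case: (app_field h) => r0 [net [h1 h2]].
have := reactionsP (reac_in r0) => -[c [j [cN jl [e|[e|e]]]]].
- rewrite e /= in net h2; move: (h2 _ _ erefl) => /pair_split [rp].
  have sj : sub_ c j \in subs c by apply: (sub_mem hH1) => //; apply: ltnW.
  have Uint := int_is cN jl.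
  have Enon := enz_nonint hH1 cN.
  have Snon := subs_nonint hH1 cN sj.
  have ES := enz_neq_sub hH1 cN sj.
  move: net => /netP [fU|fE|fS] [[eY hh]|[sY hh]].
  + apply: (IH r.-1 (sub_ c j)) hh; split; first by rewrite -eY eq_sym.
    split.
      left; split => //.
      case: (Ralpha_int cN jl) => [|pe|[s sc ps]]; first by rewrite -fU.
        by exfalso; apply: hYa; rewrite -eY.
      case: (H2c cN) => k [_ hk _]; by rewrite hk // -(hk s sc).
    case => [sV|[s0|sYi]].
    * by move: Snon; rewrite sV Vint.
    * have cc : c = cY.
        apply: (cplx_comp hH1 cN hcY (cplx_mem sj)).
        by rewrite eY -hcYe; apply: cplx_mem; rewrite hcYs.
      by apply: Bf; right; right; rewrite fU -cc int_mem.
    * by move: Snon; rewrite (in_int_is hcY sYi).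
  + apply: (IH r.-1 (enz c)) hh; split; first by rewrite -sY.
    split.
      left; split => //.
      case: (Ralpha_int cN jl) => [|pe|[s sc ps]]; first by rewrite -fU.
        by [].
      case: (H2c cN) => k [_ hk _]; exfalso; apply: hYa.
      by rewrite -sY hk // -(hk s sc).
    case => [sV|[s0|sYi]].
    * by move: Enon; rewrite sV Vint.
    * have cc : c = cY.
        apply: (cplx_comp hH1 cN hcY (cplx_mem sj)).
        by rewrite sY c2C -hcYe; apply: cplx_mem; rewrite hcYs.
      by move: ES; rewrite sY cc hcYe eqxx.
    * by move: Enon; rewrite (in_int_is hcY sYi).
  + by move: fY; rewrite fE eY eqxx.
  + apply: (IH r.-1 (enz c)) hh; split; first by rewrite -sY.
    split; first by left; split => //; rewrite -fE; apply: Ralpha_non Rf; rewrite fE.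
    by move=> Be; apply: Bf; rewrite fE.
  + apply: (IH r.-1 (sub_ c j)) hh; split; first by rewrite -eY eq_sym.
    split; first by left; split => //; rewrite -fS; apply: Ralpha_non Rf; rewrite fS.
    by move=> Be; apply: Bf; rewrite fS.
  + by move: fY; rewrite fS sY eqxx.
- have [S' [eS' sS']] : exists S', reac r0 = (c1 (int_ c j), c2 (enz c) S') /\ S' \in subs c.
    by exists (sub_ c j); split => //; apply: (sub_mem hH1) => //; apply: ltnW.
  move: (h1 (int_ c j)); rewrite eS' => /(_ erefl) hh.
  rewrite eS' /= in net.
  apply: (IH r (int_ c j)) hh.
  have Uint := int_is cN jl.
  have Snon := subs_nonint hH1 cN sS'.
  have Enon := enz_nonint hH1 cN.
  move: net; rewrite eq_sym => /netP [fU|fE|fS].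
  + by rewrite -fU.
  + split; first exact: (inter_neq Uint hYni).
    split.
      right; exists c; split => //; first exact: int_mem.
      by left; rewrite -fE; apply: Ralpha_non Rf; rewrite fE.
    case => [uV|[us0|uY]].
    * have cc : c = c0 by apply: (int_comp hH1 cN hc0 (int_mem jl)); rewrite uV.
      by apply: hYta; rewrite -cc -fE; apply: Ralpha_non Rf; rewrite fE.
    * by move: (subs_nonint hH1 hc0 us0); rewrite Uint.
    * have cc : c = cY := int_comp hH1 cN hcY (int_mem jl) uY.
      by move: fY; rewrite fE cc hcYe eqxx.
  + split; first exact: (inter_neq Uint hYni).
    split.
      right; exists c; split => //; first exact: int_mem.
      by right; exists S' => //; rewrite -fS; apply: Ralpha_non Rf; rewrite fS.
    case => [uV|[us0|uY]].
    * have cc : c = c0 by apply: (int_comp hH1 cN hc0 (int_mem jl)); rewrite uV.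
      by apply: Bf; right; left; rewrite fS -cc.
    * by move: (subs_nonint hH1 hc0 us0); rewrite Uint.
    * have cc : c = cY := int_comp hH1 cN hcY (int_mem jl) uY.
      by apply: Bf; right; left; rewrite fS -hcYs -cc.
- have [S' [eS' sS']] : exists S', reac r0 = (c1 (int_ c j), c2 (enz c) S') /\ S' \in subs c.
    by exists (sub_ c j.+1); split => //; apply: (sub_mem hH1).
  move: (h1 (int_ c j)); rewrite eS' => /(_ erefl) hh.
  rewrite eS' /= in net.
  apply: (IH r (int_ c j)) hh.
  have Uint := int_is cN jl.
  have Snon := subs_nonint hH1 cN sS'.
  have Enon := enz_nonint hH1 cN.
  move: net; rewrite eq_sym => /netP [fU|fE|fS].
  + by rewrite -fU.
  + split; first exact: (inter_neq Uint hYni).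
    split.
      right; exists c; split => //; first exact: int_mem.
      by left; rewrite -fE; apply: Ralpha_non Rf; rewrite fE.
    case => [uV|[us0|uY]].
    * have cc : c = c0 by apply: (int_comp hH1 cN hc0 (int_mem jl)); rewrite uV.
      by apply: hYta; rewrite -cc -fE; apply: Ralpha_non Rf; rewrite fE.
    * by move: (subs_nonint hH1 hc0 us0); rewrite Uint.
    * have cc : c = cY := int_comp hH1 cN hcY (int_mem jl) uY.
      by move: fY; rewrite fE cc hcYe eqxx.
  + split; first exact: (inter_neq Uint hYni).
    split.
      right; exists c; split => //; first exact: int_mem.
      by right; exists S' => //; rewrite -fS; apply: Ralpha_non Rf; rewrite fS.
    case => [uV|[us0|uY]].
    * have cc : c = c0 by apply: (int_comp hH1 cN hc0 (int_mem jl)); rewrite uV.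
      by apply: Bf; right; left; rewrite fS -cc.
    * by move: (subs_nonint hH1 hc0 us0); rewrite Uint.
    * have cc : c = cY := int_comp hH1 cN hcY (int_mem jl) uY.
      by apply: Bf; right; left; rewrite fS -hcYs -cc.
Qed.

Lemma X_in_subs l r : appearsS (yv r) (iter l tderN (pvar (inl X : var N))) -> X \in subs c0.
Proof.
move=> h; case: (boolP (X \in subs c0)) => // nX; exfalso.
apply: (goal1 (n := l) (r := r) (f := X)) h.
split; first exact: XnY.
split; first by left.
case => [xV|[xs|xi]]; first by move: hXni; rewrite xV Vint.
  by rewrite xs in nX.
by move: hXni; rewrite (in_int_is hcY xi).
Qed.

Lemma interm r n : forall c j, c \in N -> (j < size (ints c))%N -> int_ c j != V ->
  appearsS (yv r) (iter n tderN (pvar (inl (int_ c j) : var N))) ->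
  exists2 n', (n' < n)%N &
    appearsS (yv r) (iter n' tderN (pmul (pvar (inl (enz c) : var N)) (pvar (inl (sub_ c j) : var N)))).
Proof.
elim: n => [|n IH] c j cN jl UV h.
  by move: UV; rewrite (yv_c1 (app_pvar h)) eqxx.
case: (app_field h) => r0 [net [h1 h2]].
have Uint := int_is cN jl.
have := reactionsP (reac_in r0) => -[c' [j' [cN' jl' [e|[e|e]]]]].
- rewrite e /= in net h2.
  have sj : sub_ c' j' \in subs c' by apply: (sub_mem hH1) => //; apply: ltnW.
  move: net => /netP [fU|fE|fS].
  + have [cc jj] := int_uniq hH1 cN cN' jl jl' fU; subst c' j'.
    by exists n => //; apply: h2.
  + by move: (enz_nonint hH1 cN'); rewrite -fE Uint.
  + by move: (subs_nonint hH1 cN' sj); rewrite -fS Uint.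
- rewrite e /= in net h1; move: net; rewrite eq_sym => /netP [fU|fE|fS].
  + have := h1 _ erefl; rewrite -fU => /(IH c j cN jl UV) [n' n'l hh].
    by exists n' => //; exact: ltnW.
  + by move: (enz_nonint hH1 cN'); rewrite -fE Uint.
  + by move: (sub_nonint hH1 cN' (ltnW jl')); rewrite -fS Uint.
- rewrite e /= in net h1; move: net; rewrite eq_sym => /netP [fU|fE|fS].
  + have := h1 _ erefl; rewrite -fU => /(IH c j cN jl UV) [n' n'l hh].
    by exists n' => //; exact: ltnW.
  + by move: (enz_nonint hH1 cN'); rewrite -fE Uint.
  + by move: (sub_nonint hH1 cN' jl'); rewrite -fS Uint.
Qed.

Definition G2 l r : Prop :=
  reacts_to N V X \/
  [/\ (1 <= r)%N, (2 <= l)%N &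
    exists t i Zw W,
      [/\ (t < r)%N, (i <= l - 2)%N, block N Y Zw W X,
          appears (yv t) (conc_deriv N i Zw)
        & ((forall l' r', (1 <= l')%N -> (l' < l)%N ->
              ~ appears (yv r') (conc_deriv N l' X)) -> t = r.-1)]].

Lemma goal2 l : forall r, (1 <= l)%N ->
  appearsS (yv r) (iter l tderN (pvar (inl X : var N))) -> G2 l r.
Proof.
elim/ltn_ind: l => l IHl r l1 h.
have rec : forall n, (n < l)%N -> (0 < r)%N ->
    appearsS (yv r.-1) (iter n tderN (pvar (inl X : var N))) -> G2 l r.
  move=> [|n] nl rp hn.
    by move: hXni; rewrite (yv_c1 (app_pvar hn)) Vint.
  case: (IHl n.+1 nl r.-1 erefl hn) => [hr|[h1 h2 [t [i [Zw [W [ht hi hb ha hm]]]]]]].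
    by left.
  right; split => //; first by lia.
  exists t, i, Zw, W; split => //; [lia | lia | ].
  move=> hmin; exfalso; apply: (hmin n.+1 r.-1) => //; by apply/appearsE.
case: l l1 IHl h rec => [//|n] _ IHl h rec.
case: (app_field h) => r0 [net [h1 h2]].
have := reactionsP (reac_in r0) => -[c [j [cN jl [e|[e|e]]]]].
- rewrite e /= in net h2.
  have Uint := int_is cN jl.
  move: (h2 _ _ erefl) => /pair_split [rp [[eY hh]|[sY hh]]];
    move: net => /netP [fU|fE|fS].
  + by move: hXni; rewrite fU Uint.
  + by move: XnY; rewrite fE eY eqxx.
  + by apply: (rec n) => //; rewrite fS.
  + by move: hXni; rewrite fU Uint.
  + by apply: (rec n) => //; rewrite fE.
  + by move: XnY; rewrite fS sY eqxx.
- have [S' [eS' sS']] : exists S', reac r0 = (c1 (int_ c j), c2 (enz c) S') /\ S' \in subs c.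
    by exists (sub_ c j); split => //; apply: (sub_mem hH1) => //; apply: ltnW.
  move: (h1 (int_ c j)); rewrite eS' => /(_ erefl) hh.
  rewrite eS' /= in net.
  have Uint := int_is cN jl.
  have Snon := subs_nonint hH1 cN sS'.
  have hXS : X = enz c \/ X = S'.
    move: net; rewrite eq_sym => /netP [fU|fE|fS]; [|by left|by right].
    by move: hXni; rewrite fU Uint.
  case: (eqVneq (int_ c j) V) => [UV|UV].
    left; case: hXS => [xE|xS].
      exists S'; split => //; rewrite xE -UV -eS'; exact: reac_in.
    exists (enz c); split; first exact: (enz_nonint hH1 cN).
    by rewrite xS c2C -UV -eS'; exact: reac_in.
  have [n' n'l hh'] := interm cN jl UV hh.
  have sj : sub_ c j \in subs c by apply: (sub_mem hH1) => //; apply: ltnW.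
  move: hh' => /pair_split [rp [[eY hh2]|[sY hh2]]].
  + right; split => //; first by clear -n'l; lia.
    exists r.-1, n', (sub_ c j), (int_ c j); split => //; [clear -rp; lia | clear -n'l; lia | | by apply/appearsE].
    have xS : X = S' by case: hXS => // xE; move: XnY; rewrite xE eY eqxx.
    have [ra rb _] := reacts_in cN jl.
    rewrite /block -eY; split => //.
    by rewrite xS -eS'; exact: reac_in.
  + have xE : X = enz c.
      case: hXS => // xS; exfalso; apply: hYa.
      by rewrite -sY -hX xS; apply: (part_same cN sj sS').
    by apply: (rec n') => //; [clear -n'l; lia | rewrite xE].
- have [S' [eS' sS']] : exists S', reac r0 = (c1 (int_ c j), c2 (enz c) S') /\ S' \in subs c.
    by exists (sub_ c j.+1); split => //; apply: (sub_mem hH1).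
  move: (h1 (int_ c j)); rewrite eS' => /(_ erefl) hh.
  rewrite eS' /= in net.
  have Uint := int_is cN jl.
  have Snon := subs_nonint hH1 cN sS'.
  have hXS : X = enz c \/ X = S'.
    move: net; rewrite eq_sym => /netP [fU|fE|fS]; [|by left|by right].
    by move: hXni; rewrite fU Uint.
  case: (eqVneq (int_ c j) V) => [UV|UV].
    left; case: hXS => [xE|xS].
      exists S'; split => //; rewrite xE -UV -eS'; exact: reac_in.
    exists (enz c); split; first exact: (enz_nonint hH1 cN).
    by rewrite xS c2C -UV -eS'; exact: reac_in.
  have [n' n'l hh'] := interm cN jl UV hh.
  have sj : sub_ c j \in subs c by apply: (sub_mem hH1) => //; apply: ltnW.
  move: hh' => /pair_split [rp [[eY hh2]|[sY hh2]]].
  + right; split => //; first by clear -n'l; lia.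
    exists r.-1, n', (sub_ c j), (int_ c j); split => //; [clear -rp; lia | clear -n'l; lia | | by apply/appearsE].
    have xS : X = S' by case: hXS => // xE; move: XnY; rewrite xE eY eqxx.
    have [ra rb _] := reacts_in cN jl.
    rewrite /block -eY; split => //.
    by rewrite xS -eS'; exact: reac_in.
  + have xE : X = enz c.
      case: hXS => // xS; exfalso; apply: hYa.
      by rewrite -sY -hX xS; apply: (part_same cN sj sS').
    by apply: (rec n') => //; [clear -n'l; lia | rewrite xE].
Qed.
End Main.

Theorem mainTheorem13 (S : finType) (N : network S) (M : nat) (part : S -> nat)
  (hH1 : H1 N) (hH2 : H2 N M part)
  (c0 : rcomp S) (V : S) (hc0 : c0 \in N) (hV : V \in ints c0)
  (Y : S) (hYni : ~~ is_intermediate N Y)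
  (hY : exists2 c1 : rcomp S, c1 \in N & enz c1 = Y /\ subs c1 =i subs c0)
  (X : S) (hXni : ~~ is_intermediate N X) (alpha : nat) (halpha : (1 <= alpha)%N)
  (hX : part X = alpha) (hYa : part Y <> alpha) (hYta : part (enz c0) <> alpha)
  (r l : nat) (hl : (1 <= l)%N) (happ : appears (mono_yv Y V r) (conc_deriv N l X)) :
  X \in subs c0 /\
  (reacts_to N V X \/
   [/\ (1 <= r)%N, (2 <= l)%N &
    exists t i Zw W,
      [/\ (t < r)%N, (i <= l - 2)%N, block N Y Zw W X,
          appears (mono_yv Y V t) (conc_deriv N i Zw)
        & ((forall l' r', (1 <= l')%N -> (l' < l)%N ->
              ~ appears (mono_yv Y V r') (conc_deriv N l' X)) -> t = r.-1)]]).
Proof.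
case: hY => cY hcY [hcYe hcYs].
move/appearsE: happ => happS.
split.
  exact: (X_in_subs hH1 hH2 hc0 hV hYni hcY hcYe hcYs hXni hX hYa hYta happS).
exact: (goal2 hH1 hH2 hc0 hV hYni hcY hXni hX hYa hYta hl happS).
Qed.
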